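(* Let $L$ be a finite-dimensional Lie algebra over a field $F$. Then $L$ is solvable if and only if $\eta(L:M)=\dim(L/M)$ for all maximal subalgebras $M$ of $L$.
   Context: For a nonzero subalgebra $X$ of $L$, the strict core $k(X)$ is the sum of all ideals of $L$ that are proper subalgebras of $X$ (it is $0$ if there are none). For a maximal subalgebra $M$, a subalgebra $C$ is a completion of $M$ if $C\not\subseteq M$ but every proper subalgebra of $C$ that is an ideal of $L$ is contained in $M$; an ideal completion is a completion that is an ideal of $L$. The ideal index $\eta(L:M)$ is $\dim(C/k(C))$ for any ideal completion $C$ of $M$ (independent of the choice of $C$). *)

(* Defs.v *)
From HB Require Import structures.
From mathcomp Require Import all_boot all_order all_algebra.
From Stdlib Require Import ClassicalEpsilon.
Set Implicit Arguments. Unset Strict Implicit. Unset Printing Implicit Defensive.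
Import GRing.Theory.
Local Open Scope ring_scope.

Section Lie.
Variables (F : fieldType) (L : vectType F) (br : L -> L -> L).

Definition is_lie_bracket : Prop :=
  [/\ (forall a x y z, br (a *: x + y) z = a *: br x z + br y z),
      (forall a x y z, br x (a *: y + z) = a *: br x y + br x z),
      (forall x, br x x = 0) &
      (forall x y z, br x (br y z) + br y (br z x) + br z (br x y) = 0)].

(* [U, V] : the subspace spanned by all brackets [u, v], u in U, v in V
   (by bilinearity, spanned by brackets of basis vectors). *)
Definition bracket_space (U V : {vspace L}) : {vspace L} :=
  (<< [seq br u v | u <- vbasis U, v <- vbasis V] >>)%VS.

Definition derived (k : nat) : {vspace L} :=
  iter k (fun U => bracket_space U U) fullv.

Definition lie_solvable : Prop := exists n, derived n = 0%VS.

Definition lie_subalgebra (U : {vspace L}) : Prop :=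
  forall u v, u \in U -> v \in U -> br u v \in U.

Definition lie_ideal (U : {vspace L}) : Prop :=
  forall x u, u \in U -> br x u \in U.

Definition proper_sub (U V : {vspace L}) : Prop :=
  (U <= V)%VS /\ U <> V.

Definition maximal_subalgebra (M : {vspace L}) : Prop :=
  [/\ lie_subalgebra M, M <> fullv &
      forall N, lie_subalgebra N -> (M <= N)%VS -> N = M \/ N = fullv].

(* K is the sum of all ideals of L that are proper subalgebras of X,
   i.e. the least subspace containing all of them (0 if there are none). *)
Definition strict_core_spec (X K : {vspace L}) : Prop :=
  (forall I, lie_ideal I -> proper_sub I X -> (I <= K)%VS) /\
  (forall W, (forall I, lie_ideal I -> proper_sub I X -> (I <= W)%VS) ->
             (K <= W)%VS).

Definition strict_core (X : {vspace L}) : {vspace L} :=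
  epsilon (inhabits 0%VS) (strict_core_spec X).

Definition completion (M C : {vspace L}) : Prop :=
  [/\ lie_subalgebra C, ~ (C <= M)%VS &
      forall I, lie_subalgebra I -> proper_sub I C -> lie_ideal I ->
        (I <= M)%VS].

Definition ideal_completion (M C : {vspace L}) : Prop :=
  completion M C /\ lie_ideal C.

(* The ideal index eta(L:M) = dim(C / k(C)) for an ideal completion C of M
   (independent of the choice of C, per the paper). *)
Definition ideal_index (M : {vspace L}) : nat :=
  let C := epsilon (inhabits 0%VS) (ideal_completion M) in
  (\dim C - \dim (strict_core C))%N.

End Lie.

(* Main.v *)
Require Import Defs.
From mathcomp Require Import all_boot all_order all_algebra.
From Stdlib Require Import ClassicalEpsilon Classical Lia.
From mathcomp Require Import zify.
Set Implicit Arguments. Unset Strict Implicit. Unset Printing Implicit Defensive.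
Import GRing.Theory.
Local Open Scope ring_scope.

Lemma nat_max_ex (Q : nat -> Prop) n :
  (exists k, Q k) -> (forall k, Q k -> (k <= n)%N) ->
  exists k, Q k /\ forall j, Q j -> (j <= k)%N.
Proof.
elim: n => [|n IH] [k Qk] Hb.
  exists k; split=> // j /Hb; have := Hb _ Qk; lia.
case: (classic (Q n.+1)) => Qn.
  by exists n.+1; split.
apply: IH; first by exists k.
move=> j Qj; have := Hb _ Qj; rewrite leq_eqVlt ltnS => /orP[/eqP E|//].
by subst j.
Qed.

Lemma nat_min_ex (Q : nat -> Prop) :
  (exists k, Q k) -> exists k, Q k /\ forall j, Q j -> (k <= j)%N.
Proof.
move=> [k]; elim/ltn_ind: k => k IH Qk.
case: (classic (exists j, (j < k)%N /\ Q j)) => [[j [ljk Qj]]|H].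
  exact: IH Qj.
exists k; split=> // j Qj; rewrite leqNgt; apply/negP=> ljk; apply: H; by exists j.
Qed.

Section VS.
Variables (F : fieldType) (V : vectType F).
Implicit Types U W : {vspace V}.

Lemma vs_max_ex (P : {vspace V} -> Prop) :
  (exists U, P U) -> exists U, P U /\ forall U', P U' -> (\dim U' <= \dim U)%N.
Proof.
move=> [U0 PU0].
have Hb : forall k, (exists U, P U /\ \dim U = k) -> (k <= \dim (fullv : {vspace V}))%N.
  by move=> k [U [_ <-]]; apply: dimvS; apply: subvf.
have [k [[U [PU <-]] Hk]] := @nat_max_ex (fun k => exists U, P U /\ \dim U = k)
   (\dim (fullv : {vspace V})) (ex_intro _ _ (ex_intro _ U0 (conj PU0 erefl))) Hb.
exists U; split=> // U' PU'; apply: Hk; by exists U'.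
Qed.

Lemma vs_min_ex (P : {vspace V} -> Prop) :
  (exists U, P U) -> exists U, P U /\ forall U', P U' -> (\dim U <= \dim U')%N.
Proof.
move=> [U0 PU0].
have [k [[U [PU <-]] Hk]] := @nat_min_ex (fun k => exists U, P U /\ \dim U = k)
   (ex_intro _ _ (ex_intro _ U0 (conj PU0 erefl))).
exists U; split=> // U' PU'; apply: Hk; by exists U'.
Qed.

Lemma sub_dim_eq U W : (U <= W)%VS -> (\dim W <= \dim U)%N -> U = W.
Proof. by move=> s d; apply/eqP; rewrite eqEdim s d. Qed.

Definition closedP (P : V -> Prop) := P 0 /\ forall c u w, P u -> P w -> P (c *: u + w).

Definition spanP (P : V -> Prop) : {vspace V} :=
  epsilon (inhabits 0%VS) (fun U => forall v, v \in U <-> P v).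

Lemma spanPE P : closedP P -> forall v, v \in spanP P <-> P v.
Proof.
move=> [P0 PC]; rewrite /spanP; apply: (epsilon_spec (inhabits 0%VS) (fun U => forall v, v \in U <-> P v)).
have h0 : forall v, v \in (0%VS : {vspace V}) -> P v by move=> v; rewrite memv0 => /eqP ->.
have [U [HU Hmax]] := @vs_max_ex (fun U => forall v, v \in U -> P v) (ex_intro _ _ h0).
exists U => v; split; first exact: HU.
move=> Pv; have HUv : forall w, w \in (U + <[v]>)%VS -> P w.
  move=> w /memv_addP[u Uu [x /vlineP[c ->] ->]].
  by rewrite addrC; apply: PC => //; apply: HU.
have := Hmax _ HUv => d.
have e := sub_dim_eq (addvSl U <[v]>) d.
by rewrite e (subvP (addvSr U _)) ?memv_line.
Qed.

Lemma span_ind (P : V -> Prop) (X : seq V) :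
  closedP P -> (forall x, x \in X -> P x) -> forall y, y \in <<X>>%VS -> P y.
Proof.
move=> cP HX y Hy; apply/(spanPE cP).
have : (<<X>> <= spanP P)%VS by apply/span_subvP => x /HX /(spanPE cP).
by move/subvP; apply.
Qed.

Lemma vbasis_ind (P : V -> Prop) U :
  closedP P -> (forall x, x \in vbasis U -> P x) -> forall y, y \in U -> P y.
Proof.
move=> cP HX y; rewrite -{1}(span_basis (vbasisP U)); exact: span_ind.
Qed.

Lemma notsub_ex U W : ~ (U <= W)%VS -> exists2 u, u \in U & u \notin W.
Proof. by move/negP/subvPn. Qed.

End VS.

Section LieBasics.
Variables (F : fieldType) (L : vectType F) (br : L -> L -> L).
Hypothesis hbr : is_lie_bracket br.

Lemma brL a x y z : br (a *: x + y) z = a *: br x z + br y z.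
Proof. by case: hbr. Qed.
Lemma brR a x y z : br x (a *: y + z) = a *: br x y + br x z.
Proof. by case: hbr. Qed.
Lemma braa x : br x x = 0.
Proof. by case: hbr. Qed.
Lemma jacobi x y z : br x (br y z) + br y (br z x) + br z (br x y) = 0.
Proof. by case: hbr. Qed.

Lemma br0l z : br 0 z = 0.
Proof. by have := brL 1 0 0 z; rewrite !scale1r addr0 => /(congr1 (fun t => t - br 0 z)); rewrite addrK subrr => <-. Qed.
Lemma br0r z : br z 0 = 0.
Proof. by have := brR 1 z 0 0; rewrite !scale1r addr0 => /(congr1 (fun t => t - br z 0)); rewrite addrK subrr => <-. Qed.
Lemma brDl x y z : br (x + y) z = br x z + br y z.
Proof. by have := brL 1 x y z; rewrite !scale1r. Qed.
Lemma brDr x y z : br z (x + y) = br z x + br z y.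
Proof. by have := brR 1 z x y; rewrite !scale1r. Qed.
Lemma brZl a x z : br (a *: x) z = a *: br x z.
Proof. by have := brL a x 0 z; rewrite !addr0 br0l addr0. Qed.
Lemma brZr a x z : br z (a *: x) = a *: br z x.
Proof. by have := brR a z x 0; rewrite !addr0 br0r addr0. Qed.
Lemma brNl x z : br (- x) z = - br x z.
Proof. by rewrite -scaleN1r brZl scaleN1r. Qed.
Lemma brNr x z : br z (- x) = - br z x.
Proof. by rewrite -scaleN1r brZr scaleN1r. Qed.
Lemma brBl x y z : br (x - y) z = br x z - br y z.
Proof. by rewrite brDl brNl. Qed.
Lemma brBr x y z : br z (x - y) = br z x - br z y.
Proof. by rewrite brDr brNr. Qed.
Lemma anti x y : br x y = - br y x.
Proof.
have := braa (x + y); rewrite brDl !brDr !braa add0r addr0 => /eqP.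
by rewrite addr_eq0 => /eqP.
Qed.
Lemma ad_hom x y v : br (br x y) v = br x (br y v) - br y (br x v).
Proof.
have := jacobi x y v; rewrite [br v (br x y)]anti [br v x]anti brNr.
by move=> /eqP; rewrite subr_eq0 => /eqP ->.
Qed.
Lemma ad_der b u v : br b (br u v) = br (br b u) v + br u (br b v).
Proof. by rewrite ad_hom subrK. Qed.

Lemma ideal_sub (U : {vspace L}) : lie_ideal br U -> lie_subalgebra br U.
Proof. by move=> hU u v _ Hv; apply: hU. Qed.

Lemma ideal_r (U : {vspace L}) x u : lie_ideal br U -> u \in U -> br u x \in U.
Proof. by move=> hU Hu; rewrite anti memvN; apply: hU. Qed.

Lemma bs_gen (U V : {vspace L}) u v : u \in vbasis U -> v \in vbasis V ->
  br u v \in bracket_space br U V.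
Proof. by move=> hu hv; apply: memv_span; apply: allpairs_f. Qed.

Lemma mem_bs (U V : {vspace L}) u v : u \in U -> v \in V -> br u v \in bracket_space br U V.
Proof.
move=> Hu Hv.
have step : forall e, e \in vbasis U -> forall v, v \in V -> br e v \in bracket_space br U V.
  move=> e he; apply: vbasis_ind.
    split=> [|c x y hx hy] /=; first by rewrite br0r mem0v.
    by rewrite brR memvD ?memvZ.
  by move=> x hx; apply: bs_gen.
move: u Hu; apply: vbasis_ind.
  split=> [|c x y hx hy] /=; first by rewrite br0l mem0v.
  by rewrite brL memvD ?memvZ.
by move=> x hx; apply: step.
Qed.

Lemma bs_sub (U V W : {vspace L}) : (forall u v, u \in U -> v \in V -> br u v \in W) ->
  (bracket_space br U V <= W)%VS.
Proof.
move=> H; apply/span_subvP => z /allpairsP[[u v] [/= hu hv ->]].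
by apply: H; apply: vbasis_mem.
Qed.

Lemma bs_ind (P : L -> Prop) (U V : {vspace L}) : closedP P ->
  (forall u v, u \in U -> v \in V -> P (br u v)) ->
  forall w, w \in bracket_space br U V -> P w.
Proof.
move=> cP H w hw; apply/(spanPE cP).
have : (bracket_space br U V <= spanP P)%VS.
  by apply: bs_sub => u v hu hv; apply/(spanPE cP); apply: H.
by move/subvP; apply.
Qed.

Lemma bs_ideal (I : {vspace L}) : lie_ideal br I -> lie_ideal br (bracket_space br I I).
Proof.
move=> hI x; apply: bs_ind.
  split=> [|c u w hu hw] /=; first by rewrite br0r mem0v.
  by rewrite brR memvD ?memvZ.
move=> u v hu hv; rewrite ad_der memvD //; apply: mem_bs => //; exact: hI.
Qed.

Lemma bs_subalg (U : {vspace L}) : lie_subalgebra br U -> (bracket_space br U U <= U)%VS.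
Proof. by move=> hU; apply: bs_sub => u v; apply: hU. Qed.

Lemma bs_mono (U V : {vspace L}) : (U <= V)%VS -> (bracket_space br U U <= bracket_space br V V)%VS.
Proof.
by move=> s; apply: bs_sub => u v hu hv; apply: mem_bs; apply: (subvP s).
Qed.

Lemma derived_ideal k : lie_ideal br (derived br k).
Proof.
elim: k => [|k IH] /=; first by move=> x u _; apply: memvf.
exact: bs_ideal.
Qed.

Lemma sum_subalg (U I : {vspace L}) : lie_subalgebra br U -> lie_ideal br I ->
  lie_subalgebra br (U + I)%VS.
Proof.
move=> hU hI x y /memv_addP[u1 hu1 [i1 hi1 ->]] /memv_addP[u2 hu2 [i2 hi2 ->]].
rewrite brDl !brDr -addrA; apply: memv_add; first exact: hU.
by apply: memvD; [exact: hI | apply: memvD; exact: ideal_r].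
Qed.

Lemma sum_ideal (I J : {vspace L}) : lie_ideal br I -> lie_ideal br J -> lie_ideal br (I + J)%VS.
Proof.
move=> hI hJ x w /memv_addP[u hu [v hv ->]]; rewrite brDr; apply: memv_add; [exact: hI|exact: hJ].
Qed.

Lemma cap_ideal (I J : {vspace L}) : lie_ideal br I -> lie_ideal br J -> lie_ideal br (I :&: J)%VS.
Proof. by move=> hI hJ x w; rewrite !memv_cap => /andP[a b]; rewrite hI ?hJ. Qed.

Lemma iter_lin (f : L -> L) : (forall a x y, f (a *: x + y) = a *: f x + f y) ->
  forall k a x y, iter k f (a *: x + y) = a *: iter k f x + iter k f y.
Proof. by move=> hf; elim=> [//|k IH] a x y /=; rewrite IH hf. Qed.

Lemma iter_ad0 b k : iter k (br b) 0 = 0.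
Proof. by elim: k => //= k ->; rewrite br0r. Qed.

Lemma iter_adB b k x y : iter k (br b) (x - y) = iter k (br b) x - iter k (br b) y.
Proof.
have := iter_lin (fun a x y => brR a b x y) k (-1) y x; rewrite !scaleN1r.
by rewrite addrC [_ + iter _ _ x]addrC.
Qed.

Lemma iter_adD b k x y : iter k (br b) (x + y) = iter k (br b) x + iter k (br b) y.
Proof. by have := iter_lin (fun a x y => brR a b x y) k 1 x y; rewrite !scale1r. Qed.

Lemma iter_ideal (I : {vspace L}) b k x : lie_ideal br I -> x \in I -> iter k (br b) x \in I.
Proof. by move=> hI; elim: k => //= k IH /IH; apply: hI. Qed.

Lemma iter_add_n b m n x : iter (m + n) (br b) x = iter m (br b) (iter n (br b) x).
Proof. exact: iterD. Qed.

(* Leibniz-type: generalized null space is a subalgebra *)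
Lemma leib b : forall s u v k1 k2, (k1 + k2 = s)%N ->
  iter k1 (br b) u = 0 -> iter k2 (br b) v = 0 -> iter s (br b) (br u v) = 0.
Proof.
elim=> [|s IH] u v k1 k2 e h1 h2.
  have ek : k1 = 0%N by lia.
  by subst k1; move: h1 => /= ->; rewrite br0l.
case: k1 e h1 => [|k1] e h1.
  by move: h1 => /= ->; rewrite br0l iter_ad0 br0r.
case: k2 e h2 => [|k2] e h2.
  by move: h2 => /= ->; rewrite br0r iter_ad0 br0r.
rewrite iterSr ad_der iter_adD.
have e1 : (k1 + k2.+1 = s)%N by lia.
have e2 : (k1.+1 + k2 = s)%N by lia.
have h1' := h1; have h2' := h2.
rewrite iterSr in h1'; rewrite iterSr in h2'.
by rewrite (IH _ _ _ _ e1 h1' h2) (IH _ _ _ _ e2 h1 h2') addr0.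
Qed.

End LieBasics.

Section Engel.
Variable F : fieldType.

Lemma engel (n : nat) : forall (X V : vectType F) (b : X -> X -> X) (rho : X -> V -> V),
  is_lie_bracket b ->
  (forall x c u w, rho x (c *: u + w) = c *: rho x u + rho x w) ->
  (forall c x y v, rho (c *: x + y) v = c *: rho x v + rho y v) ->
  (forall x y v, rho (b x y) v = rho x (rho y v) - rho y (rho x v)) ->
  forall A Z : {vspace X}, (\dim A - \dim Z <= n)%N -> (Z <= A)%VS -> lie_subalgebra b A ->
  (forall a z, a \in A -> z \in Z -> b a z \in Z) ->
  forall W N : {vspace V}, (N <= W)%VS -> N <> W ->
  (forall a w, a \in A -> w \in W -> rho a w \in W) ->
  (forall a w, a \in A -> w \in N -> rho a w \in N) ->
  (forall z w, z \in Z -> w \in W -> rho z w \in N) ->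
  (forall a w, a \in A -> w \in W -> exists m, iter m (rho a) w \in N) ->
  (forall a a', a \in A -> a' \in A -> exists m, iter m (b a) a' \in Z) ->
  exists v, [/\ v \in W, v \notin N & forall a, a \in A -> rho a v \in N].
Proof.
elim: n => [|n IH] X V b rho hb rl1 rl2 rhom A Z hd hZA hA hZ W N hNW hNW' hsW hsN hZW hnil hnilb.
all: have triv : (A <= Z)%VS ->
  exists v, [/\ v \in W, v \notin N & forall a, a \in A -> rho a v \in N].
all: try (move=> hAZ; have [v hv hvN] : exists2 v, v \in W & v \notin N;
   [ apply: notsub_ex => hWN; apply: hNW'; exact: subv_anti (introT andP (conj hNW hWN))
   | exists v; split=> // a ha; apply: hZW => //; exact: (subvP hAZ) ]).
  apply: triv; have : (\dim A <= \dim Z)%N by lia.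
  by move/(sub_dim_eq hZA) => ->.
case: (classic ((A <= Z)%VS)) => [|hAZ]; first exact: triv.
have hZs : lie_subalgebra b Z.
  by move=> u v hu hv; apply: hZ => //; apply: (subvP hZA).
have [K [[hZK [hKA [hKA' hKs]]] Kmax]] := @vs_max_ex _ _
  (fun K => (Z <= K)%VS /\ (K <= A)%VS /\ K <> A /\ lie_subalgebra b K)
  (ex_intro _ Z (conj (subvv Z) (conj hZA (conj (fun e => hAZ (eq_ind _ (fun U => (U <= Z)%VS) (subvv Z) _ e)) hZs)))).
have dKA : (\dim K < \dim A)%N.
  rewrite ltnNge; apply/negP => d; apply: hKA'; exact: sub_dim_eq hKA d.
have dZK := dimvS hZK.
have hZK' : forall z, z \in Z -> z \in K by move=> z; apply: (subvP hZK).
have hKA1 : forall k, k \in K -> k \in A by move=> k; apply: (subvP hKA).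
have [x [hxA hxK hKx]] : exists x, [/\ x \in A, x \notin K & forall k, k \in K -> b k x \in K].
  have := IH X X b b hb (fun x c u w => brR hb c x u w) (brL hb) (ad_hom hb) K Z ltac:(lia)
    hZK hKs (fun a z ha hz => hZ a z (hKA1 a ha) hz) A K hKA hKA'
    (fun a w ha hw => hA a w (hKA1 a ha) hw) (fun a w ha hw => hKs a w ha hw).
  case=> [z w hz hw|a w ha hw|a a' ha ha'|v [h1 h2 h3]].
  - rewrite (anti hb) memvN; apply: hZK'; apply: hZ => //.
  - have [m hm] := hnilb a w (hKA1 a ha) hw; exists m; exact: hZK'.
  - exact: hnilb (hKA1 a ha) (hKA1 a' ha').
  - by exists v.
have eA : (K + <[x]>)%VS = A.
  apply: NNPP => hne.
  have hs : lie_subalgebra b (K + <[x]>)%VS.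
    move=> u v /memv_addP[k1 hk1 [y1 /vlineP[c1 ->] ->]] /memv_addP[k2 hk2 [y2 /vlineP[c2 ->] ->]].
    rewrite (brDl hb) !(brDr hb) !(brZl hb) !(brZr hb) (braa hb) !scaler0 addr0.
    apply: (subvP (addvSl K <[x]>)).
    apply: memvD; first by apply: memvD; [exact: hKs|apply: memvZ; exact: hKx].
    by rewrite (anti hb) scalerN memvN; apply: memvZ; exact: hKx.
  have sub : (K + <[x]> <= A)%VS by rewrite subv_add hKA -memvE.
  have d := Kmax _ (conj (subv_trans hZK (addvSl _ _)) (conj sub (conj hne hs))).
  have e := sub_dim_eq (addvSl K <[x]>) d.
  by move: hxK; rewrite e (subvP (addvSr K _)) ?memv_line.
have [v0 [hv0W hv0N hv0K]] := IH X V b rho hb rl1 rl2 rhom K Z ltac:(lia)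
    hZK hKs (fun a z ha hz => hZ a z (hKA1 a ha) hz) W N hNW hNW'
    (fun a w ha hw => hsW a w (hKA1 a ha) hw) (fun a w ha hw => hsN a w (hKA1 a ha) hw)
    hZW (fun a w ha hw => hnil a w (hKA1 a ha) hw)
    (fun a a' ha ha' => hnilb a a' (hKA1 a ha) (hKA1 a' ha')).
pose PW w := w \in W /\ forall k, k \in K -> rho k w \in N.
have stab : forall w, PW w -> PW (rho x w).
  move=> w [hw hk]; split; first exact: hsW.
  move=> k hkK.
  have -> : rho k (rho x w) = rho x (rho k w) + rho (b k x) w by rewrite rhom addrC subrK.
  apply: memvD; first by apply: hsN => //; apply: hk.
  by apply: hk; apply: hKx.
have itPW : forall j, PW (iter j (rho x) v0).
  by elim=> [|j IHj] /=; [split | apply: stab].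
have [m [hm hmin]] := @nat_min_ex (fun m => iter m (rho x) v0 \in N) (hnil x v0 hxA hv0W).
case: m hm hmin => [|m] hm hmin; first by rewrite /= hm in hv0N.
exists (iter m (rho x) v0); split.
- by case: (itPW m).
- by apply/negP => /hmin; rewrite ltnn.
- move=> a; rewrite -eA => /memv_addP[k hk [y /vlineP[c ->] ->]].
  rewrite addrC rl2; apply: memvD; first by apply: memvZ; rewrite -iterS.
  by case: (itPW m) => _; apply.
Qed.
End Engel.

Lemma dec_stab (F : fieldType) (V : vectType F) (D : nat -> {vspace V}) :
  (forall k, (D k.+1 <= D k)%VS) -> exists j, D j.+1 = D j.
Proof.
move=> hD; apply: NNPP => hn.
have H : forall j, (\dim (D j) + j <= \dim (D 0))%N.
  elim=> [|j IH]; first by rewrite addn0.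
  have : (\dim (D j.+1) < \dim (D j))%N.
    rewrite ltnNge; apply/negP => d; apply: hn; exists j; exact: sub_dim_eq (hD j) d.
  lia.
by have := H (\dim (D 0)).+1; move/(leq_trans (leq_addl _ _)); rewrite ltnn.
Qed.

Section Main.
Variables (F : fieldType) (L : vectType F) (br : L -> L -> L).
Hypothesis hbr : is_lie_bracket br.

Lemma engel_app (J N : {vspace L}) : lie_ideal br J -> lie_ideal br N ->
  (N <= J)%VS -> N <> J -> (J <= bracket_space br J J + N)%VS ->
  (forall b x, b \in J -> exists m, iter m (br b) x \in N) -> False.
Proof.
move=> hJ hN hNJ hNJ' hJJ hnil.
have [Q [[hNQ [hQJ [hQJ' hQs]]] Qmax]] := @vs_max_ex _ _
  (fun Q => (N <= Q)%VS /\ (Q <= J)%VS /\ Q <> J /\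
            forall j q, j \in J -> q \in Q -> br j q \in Q)
  (ex_intro _ N (conj (subvv N) (conj hNJ (conj hNJ' (fun j q _ hq => hN j q hq))))).
have hQN : forall v, v \in N -> v \in Q by move=> v; apply: (subvP hNQ).
have [v [hvJ hvQ hJv]] := engel (n:=(\dim J - \dim Q)%N) hbr (fun x c u w => brR hbr c x u w)
  (brL hbr) (ad_hom hbr) (leqnn _) hQJ (ideal_sub hJ) hQs hQJ hQJ'
  (fun a w ha hw => hJ a w hw) hQs
  (fun z w hz hw => ltac:(rewrite (anti hbr) memvN; apply: hQs => //))
  (fun a w ha hw => let: ex_intro m hm := hnil a w ha in ex_intro _ m (hQN _ hm))
  (fun a w ha hw => let: ex_intro m hm := hnil a w ha in ex_intro _ m (hQN _ hm)).
have eQ : (Q + <[v]>)%VS = J.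
  apply: NNPP => hne.
  have sub : (Q + <[v]> <= J)%VS by rewrite subv_add hQJ -memvE.
  have hs : forall j q, j \in J -> q \in (Q + <[v]>)%VS -> br j q \in (Q + <[v]>)%VS.
    move=> j q hj /memv_addP[q1 hq1 [y /vlineP[c ->] ->]].
    rewrite (brDr hbr) (brZr hbr); apply: (subvP (addvSl Q <[v]>)).
    by apply: memvD; [exact: hQs | apply: memvZ; exact: hJv].
  have d := Qmax _ (conj (subv_trans hNQ (addvSl _ _)) (conj sub (conj hne hs))).
  have e := sub_dim_eq (addvSl Q <[v]>) d.
  by move: hvQ; rewrite e (subvP (addvSr Q _)) ?memv_line.
have hbsQ : (bracket_space br J J <= Q)%VS.
  apply: bs_sub => u w hu; rewrite -eQ => /memv_addP[q hq [y /vlineP[c ->] ->]].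
  rewrite (brDr hbr) (brZr hbr); apply: memvD; [exact: hQs | apply: memvZ; exact: hJv].
apply: hQJ'; apply: subv_anti; rewrite hQJ /=.
apply: subv_trans hJJ _; by rewrite subv_add hbsQ.
Qed.

Definition Imk (b : L) (k : nat) : {vspace L} :=
  spanP (fun v => exists y, v = iter k (br b) y).

Lemma Imk_closed b k : closedP (fun v => exists y, v = iter k (br b) y).
Proof.
split; first by exists 0; rewrite iter_ad0.
move=> c u w [y1 ->] [y2 ->]; exists (c *: y1 + y2).
by rewrite (iter_lin (fun a x y => brR hbr a b x y)).
Qed.

Lemma memImk b k v : v \in Imk b k <-> exists y, v = iter k (br b) y.
Proof. exact: (spanPE (Imk_closed b k) v). Qed.

Lemma Imk_dec b k : (Imk b k.+1 <= Imk b k)%VS.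
Proof.
apply/subvP => v /memImk [y ->]; apply/memImk; exists (br b y); by rewrite iterSr.
Qed.

Lemma Imk_step b a : Imk b a.+1 = Imk b a -> Imk b a.+2 = Imk b a.+1.
Proof.
move=> e; apply: subv_anti; rewrite Imk_dec /=.
apply/subvP => v /memImk [y ->]; apply/memImk.
have : iter a (br b) y \in Imk b a.+1 by rewrite e; apply/memImk; exists y.
by case/memImk => z hz; exists z; rewrite /= hz.
Qed.

Lemma fitting b : exists e, (0 < e)%N /\
  forall z, exists y, iter e (br b) (z - iter e (br b) y) = 0.
Proof.
have [j hj] := dec_stab (Imk_dec b).
have P1 : forall i, Imk b (j + i).+1 = Imk b (j + i).
  elim=> [|i IH]; first by rewrite addn0.
  by rewrite addnS; apply: Imk_step.
have P2 : forall i, Imk b (j + i) = Imk b j.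
  elim=> [|i IH]; first by rewrite addn0.
  by rewrite addnS P1.
exists j.+1; split=> // z.
have : iter j.+1 (br b) z \in Imk b (j.+1 + j.+1).
  have -> : (j.+1 + j.+1 = j + j.+2)%N by lia.
  rewrite P2 -(P2 1%N) addn1; apply/memImk; by exists z.
case/memImk => y hy; exists y; by rewrite (iter_adB hbr) hy iterD subrr.
Qed.

Lemma ex_sc (X : {vspace L}) : exists K, strict_core_spec br X K.
Proof.
pose P (v : L) := forall W : {vspace L}, (forall I : {vspace L}, lie_ideal br I -> Defs.proper_sub I X -> (I <= W)%VS) -> v \in W.
have cP : closedP P.
  split=> [W _|c u w hu hw W hW]; first exact: mem0v.
  by apply: memvD; [apply: memvZ; apply: hu | apply: hw].
exists (spanP P); split.
  move=> I hI hIX; apply/subvP => v hv; apply/(spanPE cP) => W hW.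
  exact: (subvP (hW I hI hIX)).
by move=> W hW; apply/subvP => v /(spanPE cP); apply.
Qed.

Lemma sc_spec (X : {vspace L}) : strict_core_spec br X (strict_core br X).
Proof.
rewrite /strict_core; have [K hK] := ex_sc X.
exact: (epsilon_spec (inhabits 0%VS) (strict_core_spec br X) (ex_intro _ K hK)).
Qed.

Lemma sc_ideal (X K : {vspace L}) : strict_core_spec br X K -> lie_ideal br K.
Proof.
move=> [h1 h2].
pose P (v : L) := v \in K /\ forall x, br x v \in K.
have cP : closedP P.
  split=> [|c u w [hu hu'] [hw hw']]; first by split=> [|x]; rewrite ?(br0r hbr) mem0v.
  split; first by apply: memvD; [apply: memvZ|].
  by move=> x; rewrite (brR hbr); apply: memvD; [apply: memvZ; apply: hu'|apply: hw'].
have : (K <= spanP P)%VS.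
  apply: h2 => I hI hIX; apply/subvP => v hv; apply/(spanPE cP); split.
    exact: (subvP (h1 I hI hIX)).
  by move=> x; apply: (subvP (h1 I hI hIX)); apply: hI.
move=> /subvP sK x u /sK /(spanPE cP) [_]; apply.
Qed.

Lemma ex_ic (M : {vspace L}) : M <> fullv -> exists C, ideal_completion br M C.
Proof.
move=> hM.
have hf : ~ (fullv <= M)%VS.
  by move=> s; apply: hM; apply: subv_anti; rewrite s subvf.
have [C [[hC hCM] Cmin]] := @vs_min_ex _ _ (fun C => lie_ideal br C /\ ~ (C <= M)%VS)
  (ex_intro _ fullv (conj (fun x u _ => memvf _) hf)).
exists C; split=> //; split=> //; first exact: ideal_sub.
move=> I hIs [hIC hIC'] hI; apply: NNPP => hIM.
have d := Cmin I (conj hI hIM); apply: hIC'; exact: sub_dim_eq hIC d.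
Qed.

Lemma ic_spec (M : {vspace L}) : M <> fullv ->
  ideal_completion br M (epsilon (inhabits 0%VS) (ideal_completion br M)).
Proof.
move=> hM; have [C hC] := ex_ic hM.
exact: (epsilon_spec (inhabits 0%VS) (ideal_completion br M) (ex_intro _ C hC)).
Qed.

Lemma ic_facts (M C K : {vspace L}) : maximal_subalgebra br M -> ideal_completion br M C ->
  strict_core_spec br C K ->
  [/\ lie_ideal br K, (K <= C :&: M)%VS, (M + C)%VS = fullv &
      (\dim (fullv : {vspace L}) - \dim M = \dim C - \dim (C :&: M))%N].
Proof.
move=> [hMs hMf hMmax] [[hCs hCM hCc] hCi] hK.
have hKi := sc_ideal hK.
have hKCM : (K <= C :&: M)%VS.
  case: hK => _; apply => I hI [hIC hIC']; rewrite subv_cap hIC /=.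
  by apply: hCc; [exact: ideal_sub | split | exact: hI].
have hMC : (M + C)%VS = fullv.
  case: (hMmax (M + C)%VS (sum_subalg hbr hMs hCi) (addvSl _ _)) => // e.
  by case: hCM; rewrite -e addvSr.
split=> //.
have := dimv_sum_cap M C; rewrite hMC capvC.
have := dimvS (capvSl C M); have := dimvS (subvf M); lia.
Qed.

Lemma forward : lie_solvable br -> forall M : {vspace L}, maximal_subalgebra br M ->
     ideal_index br M = (\dim (fullv : {vspace L}) - \dim M)%N.
Proof.
move=> [n hn] M hM.
have hMf : M <> fullv by case: hM.
rewrite /ideal_index; set C := epsilon _ _.
have hC : ideal_completion br M C := ic_spec hMf.
have hK := sc_spec C; set K := strict_core br C.
have [hKi hKCM hMC hdim] := ic_facts hM hC hK.
case: hC => [[hCs hCM hCc] hCi].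
have [hMs _ _] := hM.
have hbsK : (bracket_space br C C <= K)%VS.
  case: hK => h1 _; apply: h1; first exact: bs_ideal.
  split; first exact: bs_subalg.
  move=> e; apply: hCM.
  have : forall k, (C <= derived br k)%VS.
    elim=> [|k IH] /=; first exact: subvf.
    by apply: (subv_trans _ (bs_mono hbr IH)); rewrite e subvv.
  by move=> /(_ n); rewrite hn => /subv_trans; apply; apply: sub0v.
have hCMi : lie_ideal br (C :&: M)%VS.
  move=> x y hy; have : x \in (M + C)%VS by rewrite hMC memvf.
  case/memv_addP => m hm [c hc ->]; rewrite (brDl hbr).
  move: (hy); rewrite memv_cap => /andP[hyC hyM].
  apply: memvD; first by rewrite memv_cap hCi ?hMs.
  by apply: (subvP hKCM); apply: (subvP hbsK); apply: mem_bs.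
have hCMK : (C :&: M <= K)%VS.
  case: hK => h1 _; apply: h1 => //; split; first exact: capvSl.
  by move=> e; apply: hCM; rewrite -e capvSr.
have -> : K = (C :&: M)%VS by apply: subv_anti; rewrite hKCM hCMK.
by rewrite hdim.
Qed.

Lemma converse : (forall M : {vspace L}, maximal_subalgebra br M ->
     ideal_index br M = (\dim (fullv : {vspace L}) - \dim M)%N) -> lie_solvable br.
Proof.
move=> Hc; apply: NNPP => hns.
have [k hk] := @dec_stab _ _ (derived br)
   (fun k => bs_subalg (ideal_sub (derived_ideal hbr (k:=k)))).
set S := derived br k in hk.
have hSi : lie_ideal br S := derived_ideal hbr (k:=k).
have hSp : bracket_space br S S = S := hk.
have hS0 : ~ (S <= 0)%VS.
  move=> h; apply: hns; exists k; apply: subv_anti; by rewrite h sub0v.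
have h0i : lie_ideal br (0%VS : {vspace L}).
  by move=> x u; rewrite memv0 => /eqP ->; rewrite (br0r hbr) mem0v.
have [N [[hNi hSN] Nmax]] := @vs_max_ex _ _ (fun N => lie_ideal br N /\ ~ (S <= N)%VS)
  (ex_intro _ 0%VS (conj h0i hS0)).
have Nmax' : forall I, lie_ideal br I -> (N <= I)%VS -> ~ (S <= I)%VS -> I = N.
  move=> I hI hNI hSI; apply: esym; exact: sub_dim_eq hNI (Nmax I (conj hI hSI)).
set J := (S + N)%VS.
have hJi : lie_ideal br J := sum_ideal hbr hSi hNi.
have hNJ : (N <= J)%VS := addvSr _ _.
have hNJ' : N <> J by move=> e; apply: hSN; rewrite e addvSl.
have hJJ : (J <= bracket_space br J J + N)%VS.
  rewrite subv_add addvSr andbT -{1}hSp.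
  exact: subv_trans (bs_mono hbr (addvSl S N)) (addvSl _ _).
case: (classic (exists b x, b \in J /\ forall m, iter m (br b) x \notin N))
  => [[b [x [hbJ hbx]]]|hnone]; last first.
  apply: (engel_app hJi hNi hNJ hNJ' hJJ) => b x hb; apply: NNPP => hno.
  apply: hnone; exists b, x; split=> // m; apply/negP => hm; apply: hno; by exists m.
pose P0 (v : L) := exists k, iter k (br b) v = 0.
have cP0 : closedP P0.
  split; first by exists 0%N.
  move=> c u w [k1 h1] [k2 h2]; exists (k1 + k2)%N.
  rewrite (iter_lin (fun a x y => brR hbr a b x y)) {1}addnC !iterD h1 h2 !(iter_ad0 hbr).
  by rewrite scaler0 addr0.
set L0 := spanP P0.
have hL0 : forall v, v \in L0 <-> P0 v := spanPE cP0.
have hL0s : lie_subalgebra br L0.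
  move=> u v /hL0 [k1 h1] /hL0 [k2 h2]; apply/hL0; exists (k1 + k2)%N.
  exact: (leib hbr (erefl _) h1 h2).
set T := (L0 + N)%VS.
have hTs : lie_subalgebra br T := sum_subalg hbr hL0s hNi.
have hTf : T <> fullv.
  move=> e; have : x \in T by rewrite e memvf.
  case/memv_addP => l hl [n hn ex]; case/hL0: hl => k' hk'.
  apply: (negP (hbx k')); rewrite ex (iter_adD hbr) hk' add0r; exact: iter_ideal.
have [M [[hMs [hTM hMf]] Mmax]] := @vs_max_ex _ _
  (fun M => lie_subalgebra br M /\ (T <= M)%VS /\ M <> fullv)
  (ex_intro _ T (conj hTs (conj (subvv T) hTf))).
have hM : maximal_subalgebra br M.
  split=> // N' hN' hMN'; case: (classic (N' = fullv)) => [->|hne]; [by right| left].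
  apply: esym; exact: sub_dim_eq hMN' (Mmax N' (conj hN' (conj (subv_trans hTM hMN') hne))).
have [e [he hfit]] := fitting b.
have hL0M : forall v, v \in L0 -> v \in M.
  by move=> v; apply: (subvP (subv_trans (addvSl L0 N) hTM)).
have hNM : forall v, v \in N -> v \in M.
  by move=> v; apply: (subvP (subv_trans (addvSr L0 N) hTM)).
have hIJ : forall y, iter e (br b) y \in J.
  by case: (e) he => // e0 _ y /=; apply: (ideal_r hbr _ hJi hbJ).
have hJM : ~ (J <= M)%VS.
  move=> hJM; apply: hMf; apply: subv_anti; rewrite subvf /=; apply/subvP => z _.
  have [y hy] := hfit z.
  rewrite -(subrK (iter e (br b) y) z); apply: memvD.
    by apply: hL0M; apply/hL0; exists e.
  exact: (subvP hJM).
have hbM : b \in M by apply: hL0M; apply/hL0; exists 1%N; exact: (braa hbr).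
have hbN : b \notin N.
  apply/negP => hbN; apply: (negP (hbx 1%N)); exact: (ideal_r hbr _ hNi hbN).
have := Hc M hM; rewrite /ideal_index; set C := epsilon _ _.
have hC : ideal_completion br M C := ic_spec hMf.
have hK := sc_spec C; set K := strict_core br C.
have [hKi hKCM hMC hdim] := ic_facts hM hC hK.
move=> heq.
have hKC : K = (C :&: M)%VS.
  apply: (sub_dim_eq hKCM).
  rewrite /K in heq; have := dimvS hKCM; have := dimvS (capvSl C M); lia.
have hCMi : lie_ideal br (C :&: M)%VS by rewrite -hKC.
case: hC => [[hCs hCM _] hCi].
have hCMN : (C :&: M <= N)%VS.
  have hS' : ~ (S <= C :&: M + N)%VS.
    move=> hS'; apply: hJM; rewrite subv_add; apply/andP; split.
      apply: subv_trans hS' _; rewrite subv_add capvSr /=; exact/subvP.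
    exact/subvP.
  have e2 := Nmax' _ (sum_ideal hbr hCMi hNi) (addvSr _ _) hS'.
  by rewrite -e2 addvSl.
have hSCN : (S <= C + N)%VS.
  apply: NNPP => h; have e3 := Nmax' _ (sum_ideal hbr hCi hNi) (addvSr _ _) h.
  by apply: hCM; apply: subv_trans (addvSl C N) _; rewrite e3; exact/subvP.
have : b \in (C + N)%VS.
  by apply: (subvP _ b hbJ); rewrite subv_add hSCN addvSr.
case/memv_addP => c hc [n hn eb].
have hcM : c \in M.
  have -> : c = b - n by rewrite eb addrK.
  by apply: memvB => //; apply: hNM.
have hcN : c \in N by apply: (subvP hCMN); rewrite memv_cap hc.
by move: hbN; rewrite eb memvD.
Qed.

End Main.

Theorem corollary2p6 (F : fieldType) (L : vectType F) (br : L -> L -> L)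
  (hbr : is_lie_bracket br) :
  lie_solvable br <->
  (forall M : {vspace L}, maximal_subalgebra br M ->
     ideal_index br M = (\dim (fullv : {vspace L}) - \dim M)%N).
Proof.
split; [exact: forward | exact: converse].
Qed.
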